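(* With respect to the operator norm induced by the entrywise $\ell_1$-norm $\|C\|=\sum_{x,y\in E}|C(x,y)|$ on $\mathsf M_E$, i.e. $|||S|||=\max\{\|S(C)\|:\|C\|=1\}$, we have (i) $|||L|||=1$ and (ii) $|||L-I|||\le 4/N$ (here $I$ denotes the identity operator on $\mathsf M_E$).
   Context: $E$ is a finite set with $N=\#E>8$ elements, listed in a fixed order; $\mathsf M_E$ is the space of complex $N\times N$ matrices indexed by $E\times E$. $|x\rangle$ (resp. $\langle x|$) is the column (resp. row) vector with 1 in coordinate $x$ and 0 elsewhere; $C^*$ denotes transpose. $Q$ is an irreducible stochastic matrix on $E$ with $Q(x,y)=Q(y,x)$ for all $x,y$ and $\mathrm{tr}(Q)=0$. Let $(U,V)$ be a random pair in $E\times E$ with $\mathbb P(U=x,V=y)=\frac1NQ(x,y)$ and $T=I-|U\rangle\langle U|+|U\rangle\langle V|$ ($I$ the identity matrix); the linear operator $L:\mathsf M_E\to\mathsf M_E$ is $L(C)=\mathbb E[T^*CT]$. *)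

(* Defs.v *)
(* Complex scalars: an arbitrary numClosedFieldType R
   (the paper's C is an instance). E is identified with 'I_N (fixed order). *)
From HB Require Import structures.
From mathcomp Require Import all_boot all_order all_algebra.
Set Implicit Arguments. Unset Strict Implicit. Unset Printing Implicit Defensive.
Import Order.TTheory GRing.Theory Num.Theory.
Local Open Scope ring_scope.

Section Defs.
Variables (R : numClosedFieldType) (N : nat).

Definition stochastic (Q : 'M[R]_N) : Prop :=
  (forall x y, 0 <= Q x y) /\ (forall x, \sum_y Q x y = 1).

Definition irreducible_mx (Q : 'M[R]_N) : Prop :=
  forall x y : 'I_N, exists k : nat, 0 < (iter k (mulmx Q) 1%:M) x y.

Definition Tmx (x y : 'I_N) : 'M[R]_N := 1%:M - delta_mx x x + delta_mx x y.

(* L(C) = E[T^* C T] with P(U=x,V=y) = Q(x,y)/N, T^* = transpose *)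
Definition Lop (Q : 'M[R]_N) (C : 'M[R]_N) : 'M[R]_N :=
  \sum_(x < N) \sum_(y < N) ((N%:R)^-1 * Q x y) *: ((Tmx x y)^T *m C *m Tmx x y).

Definition norm1 (C : 'M[R]_N) : R := \sum_(x < N) \sum_(y < N) `|C x y|.

Definition is_opnorm (S : 'M[R]_N -> 'M[R]_N) (a : R) : Prop :=
  (forall C, norm1 C = 1 -> norm1 (S C) <= a) /\
  (exists2 C, norm1 C = 1 & norm1 (S C) = a).
End Defs.

(* Main.v *)
Require Import Defs.
From HB Require Import structures.
From mathcomp Require Import all_boot all_order all_algebra.
Import Order.TTheory GRing.Theory Num.Theory.
Local Open Scope ring_scope.

Section Helpers.
Variables (R : numClosedFieldType) (N : nat).

Definition fxy (x y i : 'I_N) : 'I_N := if i == x then y else i.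

Lemma TmxE x y i a : Tmx R x y i a = ((fxy x y i == a)%:R : R).
Proof.
rewrite /Tmx /fxy !mxE.
have [->|ix] := eqVneq i x.
  rewrite /= (eq_sym x a) (eq_sym y a).
  have [->|ax] := eqVneq a x; rewrite ?eqxx /=.
    by rewrite subrr add0r.
  by rewrite subr0 add0r.
by rewrite /= subr0 addr0.
Qed.

Lemma Tdelta x y i j :
  (Tmx R x y)^T *m delta_mx i j *m Tmx R x y = delta_mx (fxy x y i) (fxy x y j).
Proof.
apply/matrixP => a b; rewrite !mxE.
rewrite (bigD1 j) //= big1 ?addr0; last first.
  move=> k kj; rewrite !mxE big1 ?mul0r // => l _.
  by rewrite !mxE (negbTE kj) andbF mulr0.
rewrite !mxE (bigD1 i) //= big1 ?addr0; last first.
  by move=> l li; rewrite !mxE (negbTE li) mulr0.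
rewrite !mxE !eqxx mulr1.
have := TmxE x y i a; have := TmxE x y j b; rewrite /Tmx !mxE => -> ->.
by rewrite -natrM mulnb (eq_sym a) (eq_sym b).
Qed.

Lemma norm1_ge0 (A : 'M[R]_N) : 0 <= norm1 A.
Proof. by apply: sumr_ge0 => i _; apply: sumr_ge0 => j _. Qed.

Lemma norm1D (A B : 'M[R]_N) : norm1 (A + B) <= norm1 A + norm1 B.
Proof.
rewrite /norm1 -big_split; apply: ler_sum => i _.
rewrite -big_split; apply: ler_sum => j _; rewrite mxE; exact: ler_normD.
Qed.

Lemma norm1Z c (A : 'M[R]_N) : norm1 (c *: A) = `|c| * norm1 A.
Proof.
rewrite /norm1 mulr_sumr; apply: eq_bigr => i _; rewrite mulr_sumr.
by apply: eq_bigr => j _; rewrite mxE normrM.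
Qed.

Lemma norm1N (A : 'M[R]_N) : norm1 (- A) = norm1 A.
Proof. by rewrite -scaleN1r norm1Z normrN normr1 mul1r. Qed.

Lemma norm10 : norm1 (0 : 'M[R]_N) = 0.
Proof. by rewrite /norm1 big1 // => i _; rewrite big1 // => j _; rewrite mxE normr0. Qed.

Lemma norm1_sum (I : Type) (r : seq I) (P : pred I) (F : I -> 'M[R]_N) :
  norm1 (\sum_(k <- r | P k) F k) <= \sum_(k <- r | P k) norm1 (F k).
Proof.
elim/big_ind2 : _ => //; first by rewrite norm10.
move=> A a B b HA HB; apply: le_trans (norm1D _ _) _; exact: lerD.
Qed.

Lemma sum2_delta (i j : 'I_N) (F : 'I_N -> 'I_N -> R) :
  (forall a b, (a != i) || (b != j) -> F a b = 0) ->
  \sum_a \sum_b F a b = F i j.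
Proof.
move=> HF; rewrite (bigD1 i) //= (bigD1 j) //= big1 ?addr0.
  rewrite big1 ?addr0 // => a ai; rewrite big1 // => b _; apply: HF; by rewrite ai.
by move=> b bj; apply: HF; rewrite bj orbT.
Qed.

Lemma norm1_delta (i j : 'I_N) : norm1 (delta_mx i j : 'M[R]_N) = 1.
Proof.
rewrite /norm1 (@sum2_delta i j (fun a b => `|(delta_mx i j : 'M[R]_N) a b|)).
  by rewrite mxE !eqxx normr1.
by move=> a b /orP[] H; rewrite mxE (negbTE H) ?andbF normr0.
Qed.

Definition tsum (A : 'M[R]_N) := \sum_a \sum_b A a b.

Lemma tsum_le (A : 'M[R]_N) : `|tsum A| <= norm1 A.
Proof.
apply: le_trans (ler_norm_sum _ _ _) _; apply: ler_sum => a _.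
exact: ler_norm_sum.
Qed.

Lemma tsumD (A B : 'M[R]_N) : tsum (A + B) = tsum A + tsum B.
Proof.
rewrite /tsum -big_split; apply: eq_bigr => a _; rewrite -big_split.
by apply: eq_bigr => b _; rewrite mxE.
Qed.

Lemma tsumZ c (A : 'M[R]_N) : tsum (c *: A) = c * tsum A.
Proof.
rewrite /tsum mulr_sumr; apply: eq_bigr => a _; rewrite mulr_sumr.
by apply: eq_bigr => b _; rewrite mxE.
Qed.

Lemma tsum0 : tsum (0 : 'M[R]_N) = 0.
Proof. by have := tsumZ 0 0; rewrite scale0r mul0r. Qed.

Lemma tsum_delta (i j : 'I_N) : tsum (delta_mx i j : 'M[R]_N) = 1.
Proof.
rewrite /tsum (@sum2_delta i j (fun a b => (delta_mx i j : 'M[R]_N) a b)).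
  by rewrite mxE !eqxx.
by move=> a b /orP[] H; rewrite mxE (negbTE H) ?andbF.
Qed.

Lemma seq_max (T : eqType) (G : T -> R) (s : seq T) :
  (forall x, G x \is Num.real) -> s != [::] ->
  exists2 m, m \in s & forall x, x \in s -> G x <= G m.
Proof.
move=> Hr; elim: s => [//|y s IH] _.
case: s IH => [|z s] IH.
  by exists y; rewrite ?mem_seq1 // => x; rewrite mem_seq1 => /eqP ->.
have [m ms Hm] := IH isT.
have /orP[H|H] := real_leVge (Hr y) (Hr m).
  exists m; first by rewrite inE ms orbT.
  by move=> x; rewrite inE => /orP[/eqP ->|]; [|apply: Hm].
exists y; first by rewrite inE eqxx.
move=> x; rewrite inE => /orP[/eqP ->|xs] //.
exact: le_trans (Hm _ xs) H.
Qed.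

Lemma opnorm_gen (S : 'M[R]_N -> 'M[R]_N) a :
  (forall A B, S (A + B) = S A + S B) -> (forall c A, S (c *: A) = c *: S A) ->
  (forall i j, norm1 (S (delta_mx i j)) <= a) ->
  (exists i j, norm1 (S (delta_mx i j)) = a) -> is_opnorm S a.
Proof.
move=> HD HZ Hle [i0 [j0 Ha]]; split; last first.
  by exists (delta_mx i0 j0); rewrite ?norm1_delta.
move=> C HC.
have S0 : S 0 = 0 by have := HZ 0 0; rewrite !scale0r.
rewrite (matrix_sum_delta C) (big_morph S HD S0).
apply: le_trans (norm1_sum _ _ _ _) _.
have -> : a = \sum_i \sum_j `|C i j| * a.
  rewrite -[LHS]mul1r -HC /norm1 mulr_suml; apply: eq_bigr => i _; by rewrite mulr_suml.
apply: ler_sum => i _; rewrite (big_morph S HD S0).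
apply: le_trans (norm1_sum _ _ _ _) _; apply: ler_sum => j _.
by rewrite HZ norm1Z; apply: ler_wpM2l.
Qed.


Variable (Q : 'M[R]_N).

Lemma LopD (A B : 'M[R]_N) : Lop Q (A + B) = Lop Q A + Lop Q B.
Proof.
rewrite /Lop -big_split; apply: eq_bigr => x _; rewrite -big_split.
by apply: eq_bigr => y _; rewrite (mulmxDr (Tmx R x y)^T A B) mulmxDl scalerDr.
Qed.

Lemma LopZ c (A : 'M[R]_N) : Lop Q (c *: A) = c *: Lop Q A.
Proof.
rewrite /Lop scaler_sumr; apply: eq_bigr => x _; rewrite scaler_sumr.
apply: eq_bigr => y _.
by rewrite -(scalemxAr c (Tmx R x y)^T A) -scalemxAl !scalerA mulrC.
Qed.

Definition wt (x y : 'I_N) : R := (N%:R)^-1 * Q x y.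

Lemma Lop_delta i j : Lop Q (delta_mx i j) =
  \sum_x \sum_y wt x y *: delta_mx (fxy x y i) (fxy x y j).
Proof.
apply: eq_bigr => x _; apply: eq_bigr => y _; by rewrite Tdelta.
Qed.

Hypothesis HQ : stochastic Q.
Hypothesis N0 : (0 < N)%N.

Lemma wt_ge0 x y : 0 <= wt x y.
Proof. by apply: mulr_ge0; [rewrite invr_ge0 ler0n | case: HQ]. Qed.

Lemma wrow x : \sum_y wt x y = (N%:R)^-1.
Proof. by rewrite /wt -mulr_sumr; case: HQ => _ ->; rewrite mulr1. Qed.

Lemma wsum : \sum_x \sum_y wt x y = 1.
Proof.
rewrite (eq_bigr (fun _ => (N%:R)^-1)) ?sumr_const ?card_ord; last by move=> x _; rewrite wrow.
by rewrite -[_ *+ N]mulr_natr mulVf // pnatr_eq0 -lt0n.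
Qed.

Lemma normL_delta i j : norm1 (Lop Q (delta_mx i j)) = 1.
Proof.
apply/le_anti/andP; split.
  rewrite Lop_delta; apply: le_trans (norm1_sum _ _ _ _) _.
  rewrite -wsum; apply: ler_sum => x _.
  apply: le_trans (norm1_sum _ _ _ _) _.
  by rewrite le_eqVlt; apply/orP; left; apply/eqP; apply: eq_bigr => y _; rewrite norm1Z norm1_delta mulr1 ger0_norm ?wt_ge0.
have T1 : tsum (Lop Q (delta_mx i j)) = 1.
  rewrite Lop_delta (big_morph tsum tsumD tsum0) -wsum; apply: eq_bigr => x _.
  rewrite (big_morph tsum tsumD tsum0); apply: eq_bigr => y _.
  by rewrite tsumZ tsum_delta mulr1.
by rewrite -{1}normr1 -T1; apply: tsum_le.
Qed.

Lemma sum_ind (i : 'I_N) : \sum_(x < N) ((x == i)%:R : R) = 1.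
Proof.
by rewrite (bigD1 i) //= eqxx big1 ?addr0 // => x xi; rewrite (negbTE xi).
Qed.

Lemma diff_bound x y i j :
  norm1 (delta_mx (fxy x y i) (fxy x y j) - delta_mx i j : 'M[R]_N)
    <= (1+1) * (((x == i) || (x == j))%:R).
Proof.
have [Hx|Hx] := boolP ((x == i) || (x == j)).
  rewrite mulr1; apply: le_trans (norm1D _ _) _; by rewrite norm1N !norm1_delta.
rewrite mulr0; move: Hx; rewrite negb_or => /andP [xi xj].
by rewrite /fxy (eq_sym i x) (eq_sym j x) (negbTE xi) (negbTE xj) subrr norm10.
Qed.

Lemma four : (1+1)*(1+1) = 4 :> R.
Proof. by rewrite mulrDl mul1r -[4 : R]/((2 + 2)%:R) natrD -[2 : R]/((1+1)%:R) natrD. Qed.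

Lemma L_bound i j : norm1 (Lop Q (delta_mx i j) - delta_mx i j) <= 4 / N%:R.
Proof.
have E : delta_mx i j = \sum_x \sum_y wt x y *: (delta_mx i j : 'M[R]_N).
  rewrite -{1}[delta_mx i j]scale1r -wsum scaler_suml.
  by apply: eq_bigr => x _; rewrite scaler_suml.
rewrite Lop_delta [X in _ - X]E -sumrB.
apply: le_trans (norm1_sum _ _ _ _) _.
apply: (@le_trans _ _ (\sum_x (N%:R)^-1 * ((1+1) * ((x == i)%:R + (x == j)%:R)))).
  apply: ler_sum => x _; rewrite -sumrB; apply: le_trans (norm1_sum _ _ _ _) _.
  rewrite -(wrow x) mulr_suml; apply: ler_sum => y _.
  rewrite -scalerBr norm1Z ger0_norm ?wt_ge0 //; apply: (ler_wpM2l (wt_ge0 x y)).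
  apply: le_trans (diff_bound x y i j) _; apply: ler_wpM2l; first by rewrite addr_ge0 ?ler01.
  by case: (x == i); case: (x == j); rewrite /= ?addr0 ?add0r ?lerDl ?ler01 ?lexx.
rewrite -mulr_sumr -mulr_sumr big_split /= !sum_ind four mulrC.
by rewrite lexx.
Qed.

End Helpers.

Theorem proposition2p3 (R : numClosedFieldType) (N : nat) (Q : 'M[R]_N) :
  (8 < N)%N ->
  stochastic Q -> irreducible_mx Q -> Q^T = Q -> \tr Q = 0 ->
  is_opnorm (Lop Q) 1 /\
  exists a : R, is_opnorm (fun C => Lop Q C - C) a /\ a <= 4 / N%:R.
Proof.
move=> N8 HQ _ _ _.
have N0 : (0 < N)%N by apply: leq_trans N8.
pose i0 : 'I_N := Ordinal N0.
split.
  apply: opnorm_gen; [exact: LopD | exact: LopZ | | ].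
    by move=> i j; rewrite (normL_delta _ _ _ HQ N0).
  by exists i0, i0; rewrite (normL_delta _ _ _ HQ N0).
pose S := fun C : 'M[R]_N => Lop Q C - C.
have ne : enum {: 'I_N * 'I_N} != [::].
  by apply/eqP => H; have := mem_enum {: 'I_N * 'I_N} (i0, i0); rewrite H.
have [m _ Hm] := @seq_max R _ (fun p : 'I_N * 'I_N => norm1 (S (delta_mx p.1 p.2)))
   (enum {: 'I_N * 'I_N}) (fun p => ger0_real (norm1_ge0 _ _ _)) ne.
exists (norm1 (S (delta_mx m.1 m.2))); split.
  apply: opnorm_gen.
  - by move=> A B; rewrite /S LopD opprD addrACA.
  - by move=> c A; rewrite /S LopZ scalerBr.
  - by move=> i j; apply: (Hm (i, j)); rewrite mem_enum.
  - by exists m.1, m.2.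
exact: (L_bound _ _ _ HQ N0).
Qed.
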